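(* Let $\mathcal R$ be a reaction network and $\mathcal U=\mathcal U_1\cup\mathcal U_2\subseteq\mathcal S$ with $\mathcal U_1\cap\mathcal U_2=\emptyset$. Suppose $\mathcal U_1$ is eliminable in $\mathcal R$ with respect to $\mathcal F_1\subseteq\mathcal R_{\mathcal U_1}$, $\mathcal U_2$ is eliminable in $\mathcal R$ with respect to $\mathcal F_2\subseteq\mathcal R_{\mathcal U_2}$, and $(\mathcal R_{\mathcal U_1}\cup\mathcal R_{\mathcal U_1}')\cap(\mathcal R_{\mathcal U_2}\cup\mathcal R_{\mathcal U_2}')=\emptyset$. Then $\mathcal U$ is eliminable in $\mathcal R$ with respect to $\mathcal F=\mathcal F_1\cup\mathcal F_2$.
   Context: Species $S_1,\dots,S_n$ are the unit vectors of $\mathbb{N}_0^n$ and $\mathcal S=\{S_1,\dots,S_n\}$; for $x\in\mathbb{N}_0^n$, $\mathrm{supp}(x)=\{S_k: x^k>0\}$. A reaction network (RN) is a (possibly infinite) subset $\mathcal R\subseteq\mathbb{N}_0^n\times\mathbb{N}_0^n$ containing no $(y,y')$ with $y=y'$; elements $(y,y')$ are reactions $y\to y'$ with reactant $y$ and product $y'$. For $r_1=(y_1,y_1'),\ r_2=(y_2,y_2')$ define $r_1\oplus r_2=(y_1+0\vee(y_2-y_1'),\ y_2'+0\vee(y_1'-y_2))$ ($\vee$ componentwise maximum); it is associative. $\mathrm{cl}(A)$ is the set of all finite $\oplus$-sums of elements of $A$, including $(0,0)$. For $\mathcal U\subseteq\mathcal S$ and a set $B\subseteq\mathbb{N}_0^n\times\mathbb{N}_0^n$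 write $B_{\mathcal U}=\{(y,y')\in B:\mathrm{supp}(y)\cap\mathcal U\neq\emptyset\}$ and $B_{\mathcal U}'=\{(y,y')\in B:\mathrm{supp}(y')\cap\mathcal U\neq\emptyset\}$. Set $\overline{\mathcal R}=\mathrm{cl}(\mathcal R)$ and $\overline{\mathcal R}_0=\overline{\mathcal R}\setminus(\overline{\mathcal R}_{\mathcal U}\cup\overline{\mathcal R}_{\mathcal U}')$ (for the relevant $\mathcal U$). A set $\mathcal U\subseteq\mathcal S$ is eliminable in $\mathcal R$ with respect to $\mathcal F\subseteq\mathcal R_{\mathcal U}$ if for every $r_0\in\mathcal R_{\mathcal U}'$ and every $r_1\in\mathrm{cl}(\mathcal F)$ with $r_0\oplus r_1\notin\overline{\mathcal R}_{\mathcal U}$ there exists $r_2\in\mathrm{cl}(\mathcal F)$ with $r_0\oplus r_1\oplus r_2\in\overline{\mathcal R}_0$. *)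

(* Defs.v *)
From mathcomp Require Import all_boot.
Set Implicit Arguments. Unset Strict Implicit. Unset Printing Implicit Defensive.

(* Complexes: elements of N_0^n, represented as finite functions 'I_n -> nat.
   Species S_k correspond to indices k : 'I_n; a set of species is a {set 'I_n}. *)
Definition cplx (n : nat) := {ffun 'I_n -> nat}.
Definition reaction (n : nat) := (cplx n * cplx n)%type.

(* A (possibly infinite) set of reactions, as a Prop-valued predicate. *)
Definition rset (n : nat) := reaction n -> Prop.

Definition is_RN (n : nat) (R : rset n) : Prop :=
  forall y y' : cplx n, R (y, y') -> y <> y'.

Definition zero_reaction (n : nat) : reaction n := ([ffun=> 0%N], [ffun=> 0%N]).

(* r1 (+) r2 = (y1 + 0 v (y2 - y1'), y2' + 0 v (y1' - y2)); on nat, 0 v (a - b)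
   is the truncated subtraction a - b. *)
Definition oplus (n : nat) (r1 r2 : reaction n) : reaction n :=
  ([ffun k => (r1.1 k + (r2.1 k - r1.2 k))%N],
   [ffun k => (r2.2 k + (r1.2 k - r2.1 k))%N]).

Definition cl (n : nat) (A : rset n) : rset n :=
  fun r => exists s : seq (reaction n),
      (forall x, x \in s -> A x) /\ r = foldr (@oplus n) (zero_reaction n) s.

Definition meets (n : nat) (y : cplx n) (U : {set 'I_n}) : Prop :=
  exists2 k, k \in U & (0 < y k)%N.

Definition sub_U (n : nat) (B : rset n) (U : {set 'I_n}) : rset n :=
  fun r => B r /\ meets r.1 U.
Definition sub_U' (n : nat) (B : rset n) (U : {set 'I_n}) : rset n :=
  fun r => B r /\ meets r.2 U.

Definition Rbar0 (n : nat) (R : rset n) (U : {set 'I_n}) : rset n :=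
  fun r => cl R r /\ ~ sub_U (cl R) U r /\ ~ sub_U' (cl R) U r.

Definition eliminable (n : nat) (R : rset n) (U : {set 'I_n}) (F : rset n) : Prop :=
  (forall r, F r -> sub_U R U r) /\
  forall r0, sub_U' R U r0 ->
  forall r1, cl F r1 ->
    ~ sub_U (cl R) U (oplus r0 r1) ->
    exists r2, cl F r2 /\ Rbar0 R U (oplus (oplus r0 r1) r2).

(* Main.v *)
Require Import Defs.
From mathcomp Require Import all_boot.

Definition zk {n : nat} (k : 'I_n) (r : reaction n) := r.1 k = 0%N /\ r.2 k = 0%N.

Lemma zk_oplus n (k : 'I_n) (a b : reaction n) : zk k a -> zk k b -> zk k (oplus a b).
Proof. by move=> [a1 a2] [b1 b2]; rewrite /zk /oplus /= !ffunE a1 a2 b1 b2. Qed.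

Lemma zk_foldr n (k : 'I_n) (s : seq (reaction n)) :
  (forall x, x \in s -> zk k x) -> zk k (foldr (@oplus n) (zero_reaction n) s).
Proof.
elim: s => [|y s IH] H /=; first by rewrite /zk /= !ffunE.
apply: zk_oplus; first by apply: H; rewrite inE eqxx.
by apply: IH => x xs; apply: H; rewrite inE xs orbT.
Qed.

Lemma pos_foldr n (k : 'I_n) (pre post : seq (reaction n)) (x : reaction n) :
  (forall y, y \in pre -> zk k y) -> (0 < x.1 k)%N ->
  (0 < (foldr (@oplus n) (zero_reaction n) (pre ++ x :: post)).1 k)%N.
Proof.
elim: pre => [|y pre IH] H Hx /=.
  by rewrite ffunE; apply: (leq_trans Hx); apply: leq_addr.
have [y1 y2] : zk k y by apply: H; rewrite inE eqxx.
rewrite ffunE y1 y2 add0n subn0; apply: IH => // z zs.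
by apply: H; rewrite inE zs orbT.
Qed.

Lemma decomp n (F1 F2 : rset n) (s : seq (reaction n)) :
  (forall x, x \in s -> F1 x \/ F2 x) ->
  (forall x, x \in s -> F1 x) \/
  exists pre x post, s = pre ++ x :: post /\ (forall y, y \in pre -> F1 y) /\ F2 x.
Proof.
elim: s => [|y s IH] H; first by left.
have Hs : forall x, x \in s -> F1 x \/ F2 x.
  by move=> x xs; apply: H; rewrite inE xs orbT.
case: (H y); first by rewrite inE eqxx.
- move=> F1y; case: (IH Hs) => [A|[pre [x [post [E [P Q]]]]]].
    by left => x; rewrite inE => /orP [/eqP -> //|]; apply: A.
  right; exists (y :: pre), x, post; split; first by rewrite E.
  by split => // z; rewrite inE => /orP [/eqP -> //|]; apply: P.
- by move=> F2y; right; exists [::], y, s.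
Qed.

Lemma cl_mono n (A B : rset n) r : (forall x, A x -> B x) -> cl A r -> cl B r.
Proof. by move=> AB [s [Hs ->]]; exists s; split => // x /Hs /AB. Qed.

Lemma case_lemma (n : nat) (R : rset n) (U1 U2 : {set 'I_n}) (F1 F2 : rset n) :
  eliminable R U1 F1 ->
  (forall r, F2 r -> sub_U R U2 r) ->
  (forall r, (sub_U R U1 r \/ sub_U' R U1 r) -> forall k, k \in U2 -> zk k r) ->
  forall r0, sub_U' R U1 r0 ->
  forall r1, cl (fun r => F1 r \/ F2 r) r1 ->
    ~ sub_U (cl R) (U1 :|: U2) (oplus r0 r1) ->
    exists r2, cl (fun r => F1 r \/ F2 r) r2 /\
               Rbar0 R (U1 :|: U2) (oplus (oplus r0 r1) r2).
Proof.
move=> [F1U E1] F2U Z r0 Hr0 r1 [s [Hs ->]] Hn.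
have R0 : R r0 by case: Hr0.
have FR : forall x, F1 x \/ F2 x -> R x.
  by move=> x [/F1U [] | /F2U []].
have clR : cl R (oplus r0 (foldr (@oplus n) (zero_reaction n) s)).
  exists (r0 :: s); split => // x; rewrite inE => /orP [/eqP -> //|/Hs]; apply: FR.
case: (@decomp _ F1 F2 s Hs) => [A|[pre [x [post [Es [P Q]]]]]]; last first.
  exfalso; apply: Hn; split => //.
  have [_ [k kU xk]] := F2U _ Q.
  exists k; first by rewrite inE kU orbT.
  rewrite Es; have -> : oplus r0 (foldr (@oplus n) (zero_reaction n) (pre ++ x :: post))
    = foldr (@oplus n) (zero_reaction n) ((r0 :: pre) ++ x :: post) by [].
  apply: pos_foldr => // y; rewrite inE => /orP [/eqP -> | /P /F1U Hy].
    by apply: Z => //; right.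
  by apply: Z => //; left.
have cl1 : cl F1 (foldr (@oplus n) (zero_reaction n) s) by exists s.
have Hn1 : ~ sub_U (cl R) U1 (oplus r0 (foldr (@oplus n) (zero_reaction n) s)).
  move=> [C [k kU pk]]; apply: Hn; split => //; exists k => //.
  by rewrite inE kU.
have [r2 [[s2 [Hs2 Er2]] [B1 [B2 B3]]]] := E1 r0 Hr0 _ cl1 Hn1.
exists r2; split.
  by apply: (@cl_mono _ F1) => [x|]; [left|exists s2].
have Zall : forall k, k \in U2 ->
   zk k (oplus (oplus r0 (foldr (@oplus n) (zero_reaction n) s)) r2).
  move=> k kU; apply: zk_oplus; first apply: zk_oplus.
  - by apply: Z => //; right.
  - by apply: zk_foldr => y /A /F1U Hy; apply: Z => //; left.
  - by rewrite Er2; apply: zk_foldr => y /Hs2 /F1U Hy; apply: Z => //; left.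
split => //; split.
  move=> [C [k]]; rewrite inE => /orP [kU pk|kU].
    by apply: B2; split => //; exists k.
  by have [-> _] := Zall k kU.
move=> [C [k]]; rewrite inE => /orP [kU pk|kU].
  by apply: B3; split => //; exists k.
by have [_ ->] := Zall k kU.
Qed.

Theorem proposition4p6 (n : nat) (R : rset n) (U1 U2 : {set 'I_n})
  (F1 F2 : rset n) :
  is_RN R ->
  [disjoint U1 & U2] ->
  eliminable R U1 F1 ->
  eliminable R U2 F2 ->
  (forall r, (sub_U R U1 r \/ sub_U' R U1 r) ->
             ~ (sub_U R U2 r \/ sub_U' R U2 r)) ->
  eliminable R (U1 :|: U2) (fun r => F1 r \/ F2 r).
Proof.
move=> _ _ H1 H2 H5.
have Z12 : forall r, (sub_U R U1 r \/ sub_U' R U1 r) -> forall k, k \in U2 -> zk k r.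
  move=> r Hr k kU; have Rr : R r by case: Hr => [[]|[]].
  have NN := H5 r Hr; split.
    by apply/eqP; rewrite -leqn0 leqNgt; apply/negP => pk; apply: NN; left; split => //; exists k.
  by apply/eqP; rewrite -leqn0 leqNgt; apply/negP => pk; apply: NN; right; split => //; exists k.
have Z21 : forall r, (sub_U R U2 r \/ sub_U' R U2 r) -> forall k, k \in U1 -> zk k r.
  move=> r Hr k kU; have Rr : R r by case: Hr => [[]|[]].
  have NN : ~ (sub_U R U1 r \/ sub_U' R U1 r) by move=> /H5.
  split.
    by apply/eqP; rewrite -leqn0 leqNgt; apply/negP => pk; apply: NN; left; split => //; exists k.
  by apply/eqP; rewrite -leqn0 leqNgt; apply/negP => pk; apply: NN; right; split => //; exists k.
split.
  move=> r [/(proj1 H1) [Rr [k kU pk]] | /(proj1 H2) [Rr [k kU pk]]]; split => //;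
    by exists k => //; rewrite inE kU ?orbT.
move=> r0 [R0 [k]]; rewrite inE => /orP [kU pk|kU pk] r1 Hr1 Hn.
  apply: (@case_lemma _ R U1 U2 F1 F2 H1 (proj1 H2) Z12) => //; split => //; by exists k.
have Hr1' : cl (fun r => F2 r \/ F1 r) r1 by apply: cl_mono Hr1 => x [] ?; [right|left].
have Hn' : ~ sub_U (cl R) (U2 :|: U1) (oplus r0 r1) by rewrite setUC.
have [r2 [C D]] := @case_lemma _ R U2 U1 F2 F1 H2 (proj1 H1) Z21 r0 (conj R0 (ex_intro2 _ _ k kU pk)) r1 Hr1' Hn'.
exists r2; split; last by rewrite setUC.
by apply: cl_mono C => x [] ?; [right|left].
Qed.
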